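(* Let $X$ be a real Hilbert space and let $U,V$ be closed linear subspaces of $X$ such that $U\cap V=\{0\}$ and $U+V$ is closed. Then the couple $(U,V)$ is stable.
   Context: $P_C$ is the metric projection onto a closed convex nonempty set $C$; $B_X$ the closed unit ball; $\mathrm{dist}(x,S)=\inf_{s\in S}\|x-s\|$. Attouch–Wets convergence: for nonempty closed $C,D$ and $N\in\mathbb N$ let $e_N(C,D)=\sup_{c\in C\cap NB_X}\mathrm{dist}(c,D)$ ($0$ if $C\cap NB_X=\emptyset$), $h_N(C,D)=\max\{e_N(C,D),e_N(D,C)\}$; $C_j\to C$ if $h_N(C_j,C)\to0$ for every $N$. Given sequences $\{A_n\},\{B_n\}$ of closed convex nonempty sets and $a_0\in X$, the perturbed alternating projections sequences are $b_n=P_{B_n}(a_{n-1})$, $a_n=P_{A_n}(b_n)$ ($n\in\mathbb N$). The couple $(U,V)$ is stable if for every choice of sequences $\{A_n\},\{B_n\}$ of closed convex nonempty sets converging in the Attouch–Wets sense to $U$ and $V$ respectively, and every $a_0\in X$, the corresponding perturbed alternating projections sequences $\{a_n\}$ and $\{b_n\}$ converge in norm. *)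

(* Defs.v *)
From HB Require Import structures.
From mathcomp Require Import all_boot all_order all_algebra.
From mathcomp Require Import all_classical all_reals all_analysis.
Set Implicit Arguments. Unset Strict Implicit. Unset Printing Implicit Defensive.
Import Order.TTheory GRing.Theory Num.Theory.
Import numFieldNormedType.Exports.
Local Open Scope classical_set_scope.
Local Open Scope ring_scope.

Section Defs.
Context {R : realType} {X : normedModType R}.

(* ip is an inner product on X inducing the norm of X: together with
   completeness of X this makes X a real Hilbert space. *)
Definition is_inner_product (ip : X -> X -> R) : Prop :=
  (forall x y, ip x y = ip y x) /\
  (forall (a : R) (x y z : X), ip (a *: x + y) z = a * ip x z + ip y z) /\
  (forall x, `|x| ^+ 2 = ip x x).

Definition convex_set (C : set X) : Prop :=
  forall x y (t : R), C x -> C y -> 0 <= t -> t <= 1 ->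
    C (t *: x + (1 - t) *: y).

Definition closed_convex_nonempty (C : set X) : Prop :=
  closed C /\ convex_set C /\ C !=set0.

Definition closed_linear_subspace (U : set X) : Prop :=
  closed U /\ U 0 /\ (forall x y, U x -> U y -> U (x + y)) /\
  (forall (a : R) x, U x -> U (a *: x)).

Definition is_metric_proj (C : set X) (x p : X) : Prop :=
  C p /\ forall c, C c -> `|x - p| <= `|x - c|.

Definition dist (x : X) (S : set X) : R := inf [set `|x - s| | s in S].

Definition nball (N : nat) : set X := [set x | `|x| <= N%:R].

Definition excess (N : nat) (C D : set X) : R :=
  if `[< (C `&` nball N) !=set0 >] then
    sup [set dist c D | c in C `&` nball N]
  else 0.

Definition hN (N : nat) (C D : set X) : R :=
  Num.max (excess N C D) (excess N D C).

Definition AW_cvg (Cs : nat -> set X) (C : set X) : Prop :=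
  forall N : nat, (fun j => hN N (Cs j) C) @ \oo --> (0 : R).

(* a, b are perturbed alternating projection sequences for (A_n),(B_n)
   starting from a_0 :  b_n = P_{B_n}(a_{n-1}), a_n = P_{A_n}(b_n), n >= 1.
   (b 0 is an unused dummy value.) *)
Definition perturbed_alt_proj (As Bs : nat -> set X) (a0 : X)
    (a b : nat -> X) : Prop :=
  a 0%N = a0 /\
  (forall n, is_metric_proj (Bs n.+1) (a n) (b n.+1)) /\
  (forall n, is_metric_proj (As n.+1) (b n.+1) (a n.+1)).

Definition stable_couple (U V : set X) : Prop :=
  forall (As Bs : nat -> set X),
    (forall n, closed_convex_nonempty (As n)) ->
    (forall n, closed_convex_nonempty (Bs n)) ->
    AW_cvg As U -> AW_cvg Bs V ->
    forall (a0 : X) (a b : nat -> X),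
      perturbed_alt_proj As Bs a0 a b ->
      cvg (a @ \oo) /\ cvg (b @ \oo).

End Defs.

(* Main.v *)
Require Import Defs.
From HB Require Import structures.
From mathcomp Require Import all_boot all_order all_algebra.
From mathcomp Require Import all_classical all_reals all_analysis.
From mathcomp Require Import ring lra.
Import Order.TTheory GRing.Theory Num.Theory.
Import numFieldNormedType.Exports.
Local Open Scope classical_set_scope.
Local Open Scope ring_scope.


Section IP.
Context {R : realType} {X : normedModType R} {ip : X -> X -> R}
  (Hip : is_inner_product ip).

Lemma ipC x y : ip x y = ip y x.
Proof. by case: Hip. Qed.
Lemma ipLin a x y z : ip (a *: x + y) z = a * ip x z + ip y z.
Proof. by case: Hip => _ []. Qed.
Lemma ipxx x : ip x x = `|x| ^+ 2.
Proof. by case: Hip => _ [] _ ->. Qed.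
Lemma ip0l z : ip 0 z = 0.
Proof.
have := ipLin 1 0 0 z; rewrite scaler0 addr0 mul1r; lra.
Qed.
Lemma ipDl x y z : ip (x + y) z = ip x z + ip y z.
Proof. by rewrite -(scale1r x) ipLin mul1r scale1r. Qed.
Lemma ipZl a x z : ip (a *: x) z = a * ip x z.
Proof. by rewrite -(addr0 (a *: x)) ipLin ip0l addr0. Qed.
Lemma ipNl x z : ip (- x) z = - ip x z.
Proof. by rewrite -scaleN1r ipZl mulN1r. Qed.
Lemma ipBl x y z : ip (x - y) z = ip x z - ip y z.
Proof. by rewrite ipDl ipNl. Qed.
Lemma ipDr x y z : ip z (x + y) = ip z x + ip z y.
Proof. by rewrite ipC ipDl !(ipC z). Qed.
Lemma ipZr a x z : ip z (a *: x) = a * ip z x.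
Proof. by rewrite ipC ipZl ipC. Qed.
Lemma ipNr x z : ip z (- x) = - ip z x.
Proof. by rewrite ipC ipNl ipC. Qed.
Lemma ipBr x y z : ip z (x - y) = ip z x - ip z y.
Proof. by rewrite ipDr ipNr. Qed.
Lemma ip0r z : ip z 0 = 0.
Proof. by rewrite ipC ip0l. Qed.

Lemma normD2 x y : `|x + y| ^+ 2 = `|x| ^+ 2 + 2 * ip x y + `|y| ^+ 2.
Proof. rewrite -!ipxx ipDl !ipDr (ipC y x); ring. Qed.
Lemma normB2 x y : `|x - y| ^+ 2 = `|x| ^+ 2 - 2 * ip x y + `|y| ^+ 2.
Proof. by rewrite normD2 normrN ipNr; ring. Qed.

Lemma ip_le_half x y : 2 * ip x y <= `|x| ^+ 2 + `|y| ^+ 2.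
Proof.
have := normB2 x y; have := sqr_ge0 `|x - y|; lra.
Qed.

Lemma CS x y : ip x y <= `|x| * `|y|.
Proof.
have [->|x0] := eqVneq x 0; first by rewrite ip0l normr0 mul0r.
have [->|y0] := eqVneq y 0; first by rewrite ip0r normr0 mulr0.
have hx : 0 < `|x| by rewrite normr_gt0.
have hy : 0 < `|y| by rewrite normr_gt0.
have := ip_le_half (`|y| *: x) (`|x| *: y).
rewrite ipZl ipZr !normrZ !normr_id => h.
have h2 : (`|x| * `|y|) * (2 * ip x y) <= (`|x| * `|y|) * (2 * (`|x| * `|y|)).
  by move: h; rewrite !exprMn; nra.
have := ler_pM2l (mulr_gt0 hx hy); move=> E; rewrite E in h2.
by move: h2; rewrite ler_pM2l.
Qed.

Lemma CSabs x y : `|ip x y| <= `|x| * `|y|.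
Proof.
rewrite ler_norml CS andbT; have := CS x (- y).
by rewrite ipNr normrN; lra.
Qed.

End IP.


Section Gen.
Context {R : realType}.

Lemma small_inv (e : R) : 0 < e -> exists N : nat, forall n, (N <= n)%N -> n.+1%:R^-1 < e.
Proof.
move=> e0; exists (Num.truncn e^-1) => n Nn.
rewrite -ltf_pV2 ?posrE ?invr_gt0 ?ltr0Sn // invrK.
apply: lt_le_trans (truncnS_gt _) _; by rewrite ler_nat.
Qed.

Lemma near_ev {P : nat -> Prop} : (\forall n \near \oo, P n) -> exists N, forall n, (N <= n)%N -> P n.
Proof. by case=> N _ HN; exists N => n /HN. Qed.

Lemma cauchy_seq_cvg (X : completeNormedModType R) (s : nat -> X) :
  (forall e, 0 < e -> exists N, forall n, (N <= n)%N -> `|s N - s n| < e) -> cvg (s @ \oo).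
Proof.
move=> H; apply/cauchy_cvgP/cauchy_exP => e e0.
have [N HN] := H e e0; exists (s N); exists N => // n /= Nn.
by rewrite -ball_normE /ball_ /=; exact: HN.
Qed.

End Gen.

Section Proj.
Context {R : realType} {X : normedModType R} {ip : X -> X -> R}
  (Hip : is_inner_product ip).

Lemma vi {C : set X} {x p c : X} : Defs.convex_set C -> is_metric_proj C x p -> C c ->
  ip (x - p) (c - p) <= 0.
Proof.
move=> Cconv [Cp Pmin] Cc.
set a := ip (x - p) (c - p); set m := `|c - p| ^+ 2.
have key : forall t : R, 0 < t -> t < 1 -> 2 * a <= t * m.
  move=> t t0 t1.
  have Cz : C (p + t *: (c - p)).
    have -> : p + t *: (c - p) = t *: c + (1 - t) *: p.
      by rewrite scalerBr scalerBl scale1r addrCA.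
    exact: (Cconv c p t Cc Cp (ltW t0) (ltW t1)).
  have := Pmin _ Cz.
  have -> : x - (p + t *: (c - p)) = (x - p) - t *: (c - p) by rewrite opprD addrA.
  move=> h.
  have h2 : `|x - p| ^+ 2 <= `|x - p - t *: (c - p)| ^+ 2.
    by rewrite lerXn2r // ?nnegrE // normr_ge0.
  move: h2; rewrite [Z in _ <= Z](normB2 Hip) (ipZr Hip) normrZ (ger0_norm (ltW t0)) exprMn.
  rewrite -/a -/m => h2.
  have : t * (2 * a) <= t * (t * m) by nra.
  by rewrite ler_pM2l.
rewrite leNgt; apply/negP => a0.
have m0 : 0 <= m by rewrite /m exprn_ge0.
have ma : 0 < m + 2 * a by lra.
have h := key (a / (m + 2 * a)) (divr_gt0 a0 ma).
have : a / (m + 2 * a) < 1 by rewrite ltr_pdivrMr // mul1r; lra.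
move=> /h {}h.
have : 2 * a * (m + 2 * a) <= a * m.
  by move: h; rewrite mulrAC ler_pdivlMr.
nra.
Qed.

End Proj.


Section ProjThm.
Context {R : realType} {X : completeNormedModType R} {ip : X -> X -> R}
  (Hip : is_inner_product ip).

Lemma subspace_convex {W : set X} : closed_linear_subspace W -> Defs.convex_set W.
Proof.
move=> [_ [_ [WD WZ]]] x y t Wx Wy _ _; apply: WD; exact: WZ.
Qed.

Lemma subspaceB {W : set X} : closed_linear_subspace W -> forall x y, W x -> W y -> W (x - y).
Proof.
move=> [_ [_ [WD WZ]]] x y Wx Wy; apply: WD => //.
by rewrite -scaleN1r; apply: WZ.
Qed.

Lemma proj_thm (W : set X) : closed_linear_subspace W ->
  forall x, exists2 p, W p & forall w, W w -> ip (x - p) w = 0.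
Proof.
move=> HW x; have [Wc [W0 [WD WZ]]] := HW.
set S := [set `|x - w| | w in W].
have S0 : S !=set0 by exists `|x - 0|; exists 0.
have Slb : has_lbound S by exists 0 => _ [w _ <-]; exact: normr_ge0.
set d := inf S.
have dle : forall w, W w -> d <= `|x - w|.
  by move=> w Ww; apply: (ge_inf Slb); exists w.
have d0 : 0 <= d by apply: lb_le_inf S0 _ => _ [w _ <-]; exact: normr_ge0.
have approx : forall n : nat, exists w, W w /\ `|x - w| < d + n.+1%:R^-1.
  move=> n; have : inf S < d + n.+1%:R^-1 by rewrite ltrDl invr_gt0 ltr0Sn.
  by move/(inf_lt S0) => [_ [w Ww <-] h]; exists w.
have [wn Hwn] := choice approx.
clearbody d.
have parallel : forall n m, `|wn n - wn m| ^+ 2 <=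
    2 * `|x - wn n| ^+ 2 + 2 * `|x - wn m| ^+ 2 - 4 * d ^+ 2.
  move=> n m.
  have Wmid : W (2^-1 *: (wn n + wn m)).
    by apply: WZ; apply: WD; [case: (Hwn n) | case: (Hwn m)].
  have hmid := dle _ Wmid.
  have e1 : (x - wn n) + (x - wn m) = 2 *: (x - 2^-1 *: (wn n + wn m)).
    rewrite scalerBr scalerA mulfV ?pnatr_eq0 // scale1r scaler_nat mulr2n.
    by rewrite opprD addrACA.
  have e2 : (x - wn m) - (x - wn n) = wn n - wn m.
    by rewrite opprB addrC addrA subrK.
  have := normD2 Hip (x - wn n) (x - wn m).
  have := normB2 Hip (x - wn m) (x - wn n).
  rewrite e1 e2 normrZ (ipC Hip (x - wn m)) ger0_norm // => h1 h2.
  have : 2 * d <= 2 * `|x - 2^-1 *: (wn n + wn m)| by rewrite ler_pM2l.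
  move=> h3.
  have h4 : (2 * d) ^+ 2 <= (2 * `|x - 2^-1 *: (wn n + wn m)|) ^+ 2.
    by rewrite lerXn2r // ?nnegrE ?mulr_ge0.
  move: h4; rewrite !exprMn; nra.
have cau : cvg (wn @ \oo).
  apply: cauchy_seq_cvg => e e0.
  set eta := e ^+ 2 / (8 * d + 4 + e ^+ 2).
  have den0 : 0 < 8 * d + 4 + e ^+ 2 by rewrite addr_gt0 // ?exprn_gt0 //; lra.
  have eta0 : 0 < eta by rewrite divr_gt0 // exprn_gt0.
  have eta1 : eta <= 1 by rewrite ler_pdivrMr // mul1r; lra.
  have etae : (8 * d + 4) * eta < e ^+ 2.
    rewrite /eta mulrA ltr_pdivrMr //; have := exprn_gt0 2 e0; nra.
  clearbody eta.
  have [N HN] := small_inv _ eta0.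
  exists N => n Nn.
  have [_ hN] := Hwn N; have [_ hn] := Hwn n.
  have eN := HN N (leqnn N); have en := HN n Nn.
  have pos1 : 0 < N.+1%:R^-1 :> R by rewrite invr_gt0 ltr0Sn.
  have pos2 : 0 < n.+1%:R^-1 :> R by rewrite invr_gt0 ltr0Sn.
  have P := parallel N n.
  have nN := normr_ge0 (x - wn N); have nn := normr_ge0 (x - wn n).
  have hb : 0 <= d + eta by apply: addr_ge0 => //; exact: ltW.
  have q1 : `|x - wn N| ^+ 2 <= (d + eta) ^+ 2.
    rewrite lerXn2r ?nnegrE //.
    by apply: (le_trans (ltW hN)); rewrite lerD2l; exact: ltW eN.
  have q2 : `|x - wn n| ^+ 2 <= (d + eta) ^+ 2.
    rewrite lerXn2r ?nnegrE //.
    by apply: (le_trans (ltW hn)); rewrite lerD2l; exact: ltW en.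
  have : `|wn N - wn n| ^+ 2 < e ^+ 2 by nra.
  have := normr_ge0 (wn N - wn n); nra.
set p := lim (wn @ \oo).
have wnp : wn @ \oo --> p by exact: cau.
have Wp : W p.
  apply: (@closed_cvg _ _ \oo eventually_filter wn W Wc _ p wnp).
  by apply: nearW => n; case: (Hwn n).
have pmin : `|x - p| <= d.
  apply/ler_addgt0Pr => e e0.
  have e2 : 0 < e / 2 by rewrite divr_gt0.
  have [N1 H1] := near_ev (cvgr_dist_lt _ _ wnp _ e2).
  have [N2 H2] := small_inv _ e2.
  move: (maxn N1 N2) (leq_maxl N1 N2) (leq_maxr N1 N2) => n hn1 hn2.
  have h1 := H1 n hn1; have h2 := H2 n hn2.
  have [_ h3] := Hwn n.
  have := ler_distD (wn n) x p; rewrite (distrC (wn n) p) => h4.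
  move: h2 h3; move: (n.+1%:R^-1) => q h2 h3; lra.
have Hproj : is_metric_proj W x p.
  by split => // c Wc'; apply: le_trans pmin (dle _ Wc').
exists p => // w Ww.
have Hc := subspace_convex HW.
have h1 := vi Hip Hc Hproj (WD _ _ Wp Ww).
have h2 := vi Hip Hc Hproj (subspaceB HW _ _ Wp Ww).
move: h1 h2; rewrite (addrC p w) addrK (addrAC p (- w) (- p)) subrr add0r (ipNr Hip).
lra.
Qed.

End ProjThm.


Lemma id6 {G : zmodType} (x0 w y1 y0 s1 s0 : G) :
  (w - (s1 - s0)) - ((y1 - s1) - (y0 - s0)) = (x0 + w - y1) - (x0 - y0).
Proof.
have -> : (x0 + w - y1) - (x0 - y0) = w - y1 + y0.
  by rewrite -(addrA x0) (addrC x0) addrKA opprK.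
have -> : (y1 - s1) - (y0 - s0) = (y1 - y0) - (s1 - s0).
  by rewrite !opprB addrACA [RHS]addrACA (addrC (- s1)).
set c := s1 - s0.
by rewrite (opprB _ c) subrKA opprB addrA addrAC.
Qed.

Lemma id4 {G : zmodType} (u1 u0 v1 v0 : G) : (u1 - u0) + (v1 - v0) = (u1 + v1) - (u0 + v0).
Proof. by rewrite addrACA opprD. Qed.

Lemma swap_eq {G : zmodType} {u v a b : G} : u + v = a + b -> u - a = b - v.
Proof. by move=> h; apply/eqP; rewrite subr_eq addrAC (addrC b) -h addrK. Qed.

Lemma id_tele {G : zmodType} (w a b c d : G) :
  w - ((a + b) + (c + d)) = (w - (a + c)) - (b + d).
Proof. by rewrite addrACA opprD addrA. Qed.

Lemma id_lim {G : zmodType} (w a b c d : G) :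
  w - (a + b) = (w - (c + d)) - ((a - c) + (b - d)).
Proof. by rewrite id4 opprB subrKA. Qed.

Section Geo.
Context {R : realType}.
Lemma geo_sum (n : nat) : \sum_(j < n) (2^-1 : R) ^+ j = 2 - 2 * 2^-1 ^+ n.
Proof.
elim: n => [|n IH]; first by rewrite big_ord0 expr0 mulr1 subrr.
rewrite big_ord_recr /= IH exprS.
have h : 2 * (2^-1 : R) = 1 by rewrite mulfV // pnatr_eq0.
rewrite mulrA h mul1r.
move: (2^-1 ^+ n : R) => q; lra.
Qed.
End Geo.

Section OMT.
Context {R : realType} {X : completeNormedModType R} {ip : X -> X -> R}
  (Hip : is_inner_product ip).

Lemma W_subspace {U V : set X} : closed_linear_subspace U -> closed_linear_subspace V ->
  closed [set u + v | u in U & v in V] ->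
  closed_linear_subspace [set u + v | u in U & v in V].
Proof.
move=> [_ [U0 [UD UZ]]] [_ [V0 [VD VZ]]] Wc; split => //; split.
  by exists 0 => //; exists 0 => //; rewrite addr0.
split.
  move=> _ _ [u1 Uu1 [v1 Vv1 <-]] [u2 Uu2 [v2 Vv2 <-]].
  exists (u1 + u2); first exact: UD.
  exists (v1 + v2); first exact: VD.
  by rewrite addrACA.
move=> a _ [u Uu [v Vv <-]].
exists (a *: u); first exact: UZ.
exists (a *: v); first exact: VZ.
by rewrite scalerDr.
Qed.

Lemma baire_step {U V : set X} : closed_linear_subspace U -> closed_linear_subspace V ->
  closed [set u + v | u in U & v in V] ->
  exists (k : nat) (r : R), 0 < r /\
   forall w, [set u + v | u in U & v in V] w -> `|w| < r -> forall e : R, 0 < e ->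
    exists u v, [/\ U u, V v, `|u| <= 2 * k%:R, `|v| <= 2 * k%:R & `|w - (u + v)| < e].
Proof.
move=> HU HV Wcl.
have HW := W_subspace HU HV Wcl.
move: HW; set W := [set u + v | u in U & v in V] => HW.
have dec : forall x, exists u v z, [/\ U u, V v, (forall w, W w -> ip z w = 0) & x = u + v + z].
  move=> x; have [p [u Uu [v Vv <-]] Hp] := proj_thm Hip W HW x.
  by exists u, v, (x - (u + v)); split => //; rewrite addrC subrK.
pose S (k : nat) : set X := fun x => exists u v z, [/\ U u, V v, `|u| <= k%:R /\ `|v| <= k%:R,
   (forall w, W w -> ip z w = 0) & x = u + v + z].
have cover : forall x, exists k, S k x.
  move=> x; have [u [v [z [Uu Vv Hz ->]]]] := dec x.
  exists (Num.truncn (`|u| + `|v|)).+1; exists u, v, z; split => //; split.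
  - apply: le_trans (ltW (truncnS_gt _)); by rewrite lerDl.
  - apply: le_trans (ltW (truncnS_gt _)); by rewrite lerDr.
pose O k := ~` closure (S k).
have [k nd] : exists k, ~ dense (O k).
  apply/existsNP => Hall.
  have Od : forall k, open (O k) /\ dense (O k).
    by move=> k; split; [apply: closed_openC; exact: closed_closure | exact: Hall].
  have [a [_ Ha]] := Baire Od (ex_intro _ 0 I : setT !=set0) openT.
  have [k Sa] := cover a.
  exact: (Ha k I (subset_closure Sa)).
have [D [[x0 ox0] DO]] := denseNE nd.
have Dsub : forall y, D y -> closure (S k) y.
  move=> y Dy; apply: contrapT => ny.
  have : (D `&` O k) y by split.
  by rewrite DO.
have [r r0 Hr] : exists2 r : R, 0 < r & forall y, `|x0 - y| < r -> closure (S k) y.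
  have := open_nbhs_nbhs ox0; move/nbhs_ballP => [r r0 Hb].
  exists r => // y hy; apply: Dsub; apply: Hb.
  by rewrite -ball_normE.
have clos_approx : forall y, closure (S k) y -> forall e : R, 0 < e ->
    exists z, S k z /\ `|y - z| < e.
  move=> y Hy e e0; have [z [Sz Bz]] := Hy _ (nbhsx_ballx y e e0).
  by exists z; split => //; move: Bz; rewrite -ball_normE.
exists k, r; split => // w Ww wr e e0.
have e2 : 0 < e / 2 by rewrite divr_gt0.
have h1r : `|x0 - (x0 + w)| < r by rewrite opprD addrA subrr add0r normrN.
have h0r : `|x0 - x0| < r by rewrite subrr normr0.
have [y1 [[u1 [v1 [z1 [Uu1 Vv1 [nu1 nv1] Hz1 ey1]]]] d1]] := clos_approx _ (Hr _ h1r) _ e2.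
have [y0 [[u0 [v0 [z0 [Uu0 Vv0 [nu0 nv0] Hz0 ey0]]]] d0]] := clos_approx _ (Hr _ h0r) _ e2.
have Uu : U (u1 - u0) by exact: (subspaceB HU _ _ Uu1 Uu0).
have Vv : V (v1 - v0) by exact: (subspaceB HV _ _ Vv1 Vv0).
exists (u1 - u0), (v1 - v0); split => //.
- apply: le_trans (ler_normB _ _) _; move: nu1 nu0; move: (k%:R : R) => kk; lra.
- apply: le_trans (ler_normB _ _) _; move: nv1 nv0; move: (k%:R : R) => kk; lra.
set t := w - ((u1 - u0) + (v1 - v0)).
have Wt : W t.
  apply: (subspaceB HW _ _ Ww).
  by exists (u1 - u0) => //; exists (v1 - v0).
have zt : ip (z1 - z0) t = 0 by rewrite (ipBl Hip) Hz1 // Hz0 // subrr.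
have idt : t - (z1 - z0) = (x0 + w - y1) - (x0 - y0).
  have e1 : u1 + v1 + z1 - (u1 + v1) = z1 by rewrite addrC addKr.
  have e0' : u0 + v0 + z0 - (u0 + v0) = z0 by rewrite addrC addKr.
  rewrite ey1 ey0 /t id4 -(id6 x0 w (u1 + v1 + z1) (u0 + v0 + z0) (u1 + v1) (u0 + v0)).
  by rewrite e1 e0'.
have hn : `|t| ^+ 2 <= `|t - (z1 - z0)| ^+ 2.
  rewrite [Z in _ <= Z](normB2 Hip) (ipC Hip t) zt; have := sqr_ge0 `|z1 - z0|; lra.
have : `|t - (z1 - z0)| < e.
  rewrite idt; apply: le_lt_trans (ler_normB _ _) _; lra.
move=> h; have := normr_ge0 t; have := normr_ge0 (t - (z1 - z0)); nra.
Qed.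

End OMT.


Section OMT2.
Context {R : realType} {X : completeNormedModType R} {ip : X -> X -> R}
  (Hip : is_inner_product ip).

Lemma step_lemma {U V : set X} : closed_linear_subspace U -> closed_linear_subspace V ->
  closed [set u + v | u in U & v in V] ->
  exists2 M : R, 0 < M &
   forall w, [set u + v | u in U & v in V] w ->
    exists u v, [/\ U u, V v, `|u| <= M * `|w|, `|v| <= M * `|w| & `|w - (u + v)| <= `|w| / 2].
Proof.
move=> HU HV Wcl.
have [k [r [r0 approx]]] := baire_step Hip HU HV Wcl.
have HW := W_subspace HU HV Wcl.
move: HW approx; set W := [set u + v | u in U & v in V] => HW approx.
have [_ [W0 [WD WZ]]] := HW.
have [Uc [U0 [UD UZ]]] := HU; have [Vc [V0 [VD VZ]]] := HV.
have k0 : 0 <= (k%:R : R) by [].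
exists (4 * (k%:R + 1) * r^-1); first by rewrite !mulr_gt0 ?invr_gt0 //; lra.
move=> w Ww.
have [->|w0] := eqVneq w 0.
  exists 0, 0; rewrite addr0 subr0 !normr0 !mulr0 mul0r; split => //.
have nw : 0 < `|w| by rewrite normr_gt0.
pose lam := r / (2 * `|w|).
have lam0 : 0 < lam by rewrite divr_gt0 // mulr_gt0.
have Wlw : W (lam *: w) by apply: WZ.
have nlw : `|lam *: w| = r / 2.
  rewrite normrZ gtr0_norm // /lam; field; exact: lt0r_neq0.
have lr : `|lam *: w| < r by rewrite nlw; lra.
have r4 : 0 < r / 4 by rewrite divr_gt0.
have [u' [v' [Uu Vv nu nv ne]]] := approx _ Wlw lr (r / 4) r4.
have ilam : lam^-1 = 2 * `|w| * r^-1 by rewrite /lam invf_div.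
have ilam0 : 0 < lam^-1 by rewrite invr_gt0.
have wr0 : 0 <= `|w| * r^-1 by rewrite mulr_ge0 // invr_ge0 ltW.
exists (lam^-1 *: u'), (lam^-1 *: v'); split.
- exact: UZ.
- exact: VZ.
- rewrite normrZ gtr0_norm // ilam.
  have := mulr_ge0 wr0 (normr_ge0 u'); nra.
- rewrite normrZ gtr0_norm // ilam.
  have := mulr_ge0 wr0 (normr_ge0 v'); nra.
- have -> : w - (lam^-1 *: u' + lam^-1 *: v') = lam^-1 *: (lam *: w - (u' + v')).
    by rewrite scalerBr scalerA mulVf ?(gt_eqF lam0) // scale1r scalerDr.
  rewrite normrZ gtr0_norm //.
  have : lam^-1 * `|lam *: w - (u' + v')| <= lam^-1 * (r / 4).
    by rewrite ler_pM2l // ltW.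
  have -> : lam^-1 * (r / 4) = `|w| / 2.
    rewrite /lam invf_div; field; exact: lt0r_neq0.
  by [].
Qed.

End OMT2.


Section OMT3.
Context {R : realType} {X : completeNormedModType R} {ip : X -> X -> R}
  (Hip : is_inner_product ip).

Lemma series_in {U : set X} (u : nat -> X) : closed_linear_subspace U ->
  (forall j, U (u j)) -> forall n, U (series u n).
Proof.
move=> [_ [U0 [UD _]]] Uu; elim => [|n IH]; first by rewrite seriesEord /= big_ord0.
by rewrite seriesSr; apply: UD.
Qed.

Lemma series_bound (u : nat -> X) (B : R) : 0 <= B ->
  (forall j, `|u j| <= B * 2^-1 ^+ j) -> forall n, `|series u n| <= 2 * B.
Proof.
move=> B0 hu n; rewrite seriesEord /=.
apply: le_trans (ler_norm_sum _ _ _) _.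
apply: (@le_trans _ _ (\sum_(j < n) B * 2^-1 ^+ j)); first by apply: ler_sum => j _; exact: hu.
rewrite -mulr_sumr geo_sum.
have : 0 <= (2^-1 : R) ^+ n by rewrite exprn_ge0.
move: ((2^-1 : R) ^+ n) => q q0; nra.
Qed.

Lemma series_cvg (u : nat -> X) (B : R) : 0 <= B ->
  (forall j, `|u j| <= B * 2^-1 ^+ j) -> cvgn (series u).
Proof.
move=> B0 hu; apply: normed_cvg.
apply: (series_le_cvg (v_ := geometric B 2^-1)).
- by move=> n /=; exact: normr_ge0.
- by move=> n /=; rewrite mulr_ge0 // exprn_ge0.
- by move=> n /=; exact: hu.
- apply: is_cvg_geometric_series.
  by rewrite gtr0_norm ?invr_gt0 // invf_lt1 // ltr1n.
Qed.

Lemma omt {U V : set X} : closed_linear_subspace U -> closed_linear_subspace V ->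
  U `&` V = [set 0] -> closed [set u + v | u in U & v in V] ->
  exists2 K : R, 0 < K & forall u v, U u -> V v -> `|u| <= K * `|u + v|.
Proof.
move=> HU HV UV0 Wcl.
have [M M0 step] := step_lemma Hip HU HV Wcl.
have HW := W_subspace HU HV Wcl.
move: HW step; set W := [set u + v | u in U & v in V] => HW step.
have [Wc [W0 [WD WZ]]] := HW.
have [Uc [U0 [UD UZ]]] := HU; have [Vc [V0 [VD VZ]]] := HV.
have : forall w, exists uv : X * X, W w -> [/\ U uv.1, V uv.2, `|uv.1| <= M * `|w|,
    `|uv.2| <= M * `|w| & `|w - (uv.1 + uv.2)| <= `|w| / 2].
  move=> w; have [Ww|nW] := pselect (W w).
    by have [u [v H]] := step w Ww; exists (u, v).
  by exists (0, 0).
move/choice => [f Hf].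
have main : forall w, W w -> exists2 u, U u & exists2 v, V v & (w = u + v /\ `|u| <= 2 * M * `|w|).
  move=> w Ww.
  pose g x := x - ((f x).1 + (f x).2).
  pose ws j := iter j g w.
  have Wws : forall j, W (ws j).
    elim => [|j IH] //=.
    have [Uu Vv _ _ _] := Hf _ IH.
    apply: (subspaceB HW _ _ IH).
    by exists (f (ws j)).1 => //; exists (f (ws j)).2.
  have nws : forall j, `|ws j| <= 2^-1 ^+ j * `|w|.
    elim => [|j IH]; first by rewrite expr0 mul1r.
    have [_ _ _ _ h] := Hf _ (Wws j).
    rewrite exprS -mulrA.
    apply: le_trans h _.
    move: IH; move: (2^-1 ^+ j * `|w|) => q; lra.
  pose us j := (f (ws j)).1; pose vs j := (f (ws j)).2.
  have nw0 := normr_ge0 w.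
  have MB : 0 <= M * `|w| by rewrite mulr_ge0 // ltW.
  have nus : forall j, `|us j| <= M * `|w| * 2^-1 ^+ j.
    move=> j; have [_ _ h _ _] := Hf _ (Wws j).
    apply: le_trans h _; rewrite -mulrA (mulrC `|w|) ler_pM2l //.
  have nvs : forall j, `|vs j| <= M * `|w| * 2^-1 ^+ j.
    move=> j; have [_ _ _ h _] := Hf _ (Wws j).
    apply: le_trans h _; rewrite -mulrA (mulrC `|w|) ler_pM2l //.
  have Uus : forall j, U (us j) by move=> j; have [] := Hf _ (Wws j).
  have Vvs : forall j, V (vs j) by move=> j; have [] := Hf _ (Wws j).
  have tele : forall n, w - (series us n + series vs n) = ws n.
    elim => [|n IH]; first by rewrite !seriesEord /= !big_ord0 addr0 subr0.
    by rewrite !seriesSr id_tele IH.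
  have cU := series_cvg _ _ MB nus; have cV := series_cvg _ _ MB nvs.
  set uu := limn (series us); set vv := limn (series vs).
  have Uuu : U uu.
    apply: (@closed_cvg _ _ \oo eventually_filter (series us) U Uc _ uu cU).
    by apply: nearW; apply: series_in.
  have Vvv : V vv.
    apply: (@closed_cvg _ _ \oo eventually_filter (series vs) V Vc _ vv cV).
    by apply: nearW; apply: series_in.
  exists uu => //; exists vv => //; split.
    apply/eqP; rewrite -subr_eq0 -normr_le0.
    apply/ler_addgt0Pr => e e0; rewrite add0r.
    have e3 : 0 < e / 3 by rewrite divr_gt0.
    have [N1 H1] := near_ev (cvgr_dist_lt _ _ cU _ e3).
    have [N2 H2] := near_ev (cvgr_dist_lt _ _ cV _ e3).
    have e3' : 0 < e / 3 / (`|w| + 1) by rewrite divr_gt0 // ltr_pwDr.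
    have q1 : `|2^-1 : R| < 1 by rewrite gtr0_norm ?invr_gt0 // invf_lt1 // ltr1n.
    have [N3 H3] := near_ev (cvgr0_norm_lt _ (cvg_expr q1) _ e3').
    move: (maxn N1 (maxn N2 N3)) (leq_maxl N1 (maxn N2 N3)) (leq_maxr N1 (maxn N2 N3)) => n hn1 hn.
    have hn2 : (N2 <= n)%N by apply: leq_trans hn; exact: leq_maxl.
    have hn3 : (N3 <= n)%N by apply: leq_trans hn; exact: leq_maxr.
    have h1 := H1 n hn1; have h2 := H2 n hn2; have h3 := H3 n hn3.
    have hq0 : 0 <= (2^-1 : R) ^+ n by rewrite exprn_ge0.
    move: h3; rewrite /= ger0_norm // ltr_pdivlMr ?ltr_pwDr // => h3.
    have h4 := nws n.
    rewrite (id_lim w uu vv (series us n) (series vs n)) tele.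
    apply: le_trans (ler_normB _ _) _.
    have h5 := ler_normD (uu - series us n) (vv - series vs n).
    move: h3 h4; move: ((2^-1 : R) ^+ n) hq0 => q hq0 h3 h4; nra.
  apply/ler_addgt0Pr => e e0.
  have [N1 H1] := near_ev (cvgr_dist_lt _ _ cU _ e0).
  have h1 := H1 N1 (leqnn N1).
  have h2 := series_bound _ _ MB nus N1.
  have h3 := ler_normD (series us N1) (uu - series us N1); rewrite subrKC in h3.
  lra.
exists (2 * M); first by rewrite mulr_gt0.
move=> u v Uu Vv.
have Wuv : W (u + v) by exists u => //; exists v.
have [uu Uuu [vv Vvv [e hb]]] := main _ Wuv.
have h := swap_eq e.
have : (U `&` V) (u - uu).
  split; first exact: (subspaceB HU _ _ Uu Uuu).
  by rewrite h; exact: (subspaceB HV _ _ Vvv Vv).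
rewrite UV0 => /= /subr0_eq eu.
by rewrite {1}eu.
Qed.

End OMT3.


Section Angle.
Context {R : realType} {X : completeNormedModType R} {ip : X -> X -> R}
  (Hip : is_inner_product ip).

Lemma angle {U V : set X} : closed_linear_subspace U -> closed_linear_subspace V ->
  U `&` V = [set 0] -> closed [set u + v | u in U & v in V] ->
  exists c : R, [/\ 0 <= c, c < 1 & forall u v, U u -> V v -> ip u v <= c * `|u| * `|v|].
Proof.
move=> HU HV UV0 Wcl.
have [K K0 HK] := omt Hip HU HV UV0 Wcl.
have [Uc [U0 [UD UZ]]] := HU; have [Vc [V0 [VD VZ]]] := HV.
pose k2 := (K + 1) ^+ 2.
have k21 : 1 <= k2 by rewrite /k2 -[1](expr1n _ 2) lerXn2r ?nnegrE //; lra.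
pose t := (2 * k2)^-1.
have t0 : 0 < t by rewrite /t invr_gt0; lra.
have tk : t * (2 * k2) = 1 by rewrite /t mulVf //; apply: lt0r_neq0; lra.
exists (1 - t); split.
- have : t <= 2^-1 by rewrite /t lef_pV2 ?posrE; lra.
  lra.
- lra.
move=> u v Uu Vv.
have [a ea] : {a | `|u| = a} by exists `|u|.
have [b eb] : {b | `|v| = b} by exists `|v|.
have a0 : 0 <= a by rewrite -ea.
have b0 : 0 <= b by rewrite -eb.
have hcs : ip u v <= a * b by rewrite -ea -eb; exact: CS Hip u v.
rewrite ea eb.
have [ab0|abp] : a * b = 0 \/ 0 < a * b.
  by have := mulr_ge0 a0 b0; rewrite le_eqVlt => /orP [/eqP <-|->]; [left|right].
  by rewrite -mulrA ab0 mulr0; rewrite ab0 in hcs.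
have hb := HK (b *: u) (- a *: v) (UZ _ _ Uu) (VZ _ _ Vv).
have e1 : `|b *: u| = a * b by rewrite normrZ ger0_norm // mulrC ea.
have e2 : `|b *: u + - a *: v| ^+ 2 = 2 * (a * b) ^+ 2 - 2 * (a * b) * ip u v.
  rewrite (normD2 Hip) (ipZl Hip) (ipZr Hip) !normrZ ger0_norm // normrN ger0_norm // -ea -eb.
  ring.
rewrite e1 in hb.
have hb' : a * b <= (K + 1) * `|b *: u + - a *: v|.
  apply: le_trans hb _; have := normr_ge0 (b *: u + - a *: v); nra.
have h2 : (a * b) ^+ 2 <= k2 * `|b *: u + - a *: v| ^+ 2.
  rewrite /k2; have := normr_ge0 (b *: u + - a *: v); nra.
rewrite e2 in h2.
move: (ip u v) h2 => I h2.
have h3 : a * b - 2 * k2 * (a * b) + 2 * k2 * I <= 0 by nra.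
have h4 : t * (2 * k2 * I) <= t * (2 * k2 * (a * b) - a * b).
  by rewrite ler_pM2l //; lra.
nra.
Qed.

End Angle.


Section AW.
Context {R : realType} {X : completeNormedModType R}.

Lemma cone_bound {C L : set X} (eta : R) : closed_linear_subspace L -> Defs.convex_set C ->
  0 < eta -> eta <= 2^-1 ->
  (exists2 a', C a' & `|a'| < eta) ->
  (forall q, C q -> `|q| <= 1 -> exists2 l, L l & `|q - l| < eta) ->
  forall q, C q -> exists2 l, L l & `|q - l| <= 4 * eta * (1 + `|q|).
Proof.
move=> HL Cc e0 e1 [a' Ca' na'] Hsm q Cq.
have [_ [L0 [LD LZ]]] := HL.
have nq0 := normr_ge0 q.
have [q1|q1] := leP `|q| 1.
  have [l Ll hl] := Hsm q Cq q1; exists l => //; nra.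
have nq : 0 < `|q| by lra.
pose t := (2 * `|q|)^-1.
have t0 : 0 < t by rewrite /t invr_gt0; lra.
have ti : t^-1 = 2 * `|q| by rewrite /t invrK.
have tq : t * `|q| = 2^-1.
  by rewrite /t invfM -mulrA mulVf ?mulr1 //; apply: lt0r_neq0.
have t1 : t <= 1.
  have : t * `|q| <= 1 * `|q| by rewrite tq; lra.
  by rewrite ler_pM2r.
have t1' : 0 <= 1 - t by lra.
pose qt := t *: q + (1 - t) *: a'.
have Cqt : C qt := Cc q a' t Cq Ca' (ltW t0) t1.
have na0 := normr_ge0 a'.
have nqt : `|qt| <= 1.
  apply: le_trans (ler_normD _ _) _.
  rewrite !normrZ (gtr0_norm t0) (ger0_norm t1') tq; nra.
have [l Ll hl] := Hsm qt Cqt nqt.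
exists (t^-1 *: l); first exact: LZ.
have -> : q - t^-1 *: l = t^-1 *: ((qt - l) - (1 - t) *: a').
  rewrite /qt (addrAC (t *: q)) addrK scalerBr scalerA mulVf ?scale1r //.
  exact: lt0r_neq0.
rewrite normrZ gtr0_norm ?invr_gt0 //.
have : `|(qt - l) - (1 - t) *: a'| <= eta + eta.
  apply: le_trans (ler_normB _ _) _.
  rewrite normrZ (ger0_norm t1'); nra.
move=> hh; rewrite ti; nra.
lra.
Qed.

Lemma dist_le {x s : X} {S : set X} : S s -> Defs.dist x S <= `|x - s|.
Proof.
move=> Ss; apply: ge_inf; last by exists s.
by exists 0 => _ [y _ <-].
Qed.

Lemma dist_lt {x : X} {S : set X} {e : R} : S !=set0 -> Defs.dist x S < e ->
  exists2 s, S s & `|x - s| < e.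
Proof.
move=> [s Ss] h.
have ne : [set `|x - s| | s in S] !=set0 by exists `|x - s|; exists s.
by have [_ [s' Ss' <-] h'] := inf_lt ne h; exists s'.
Qed.

Lemma excess_ge (N : nat) (C D : set X) (c : X) (M : R) :
  (C `&` Defs.nball N) c ->
  (forall c', (C `&` Defs.nball N) c' -> Defs.dist c' D <= M) ->
  Defs.dist c D <= Defs.excess N C D.
Proof.
move=> Cc HM; rewrite /Defs.excess asboolT; last by exists c.
apply: ub_le_sup; last by exists c.
by exists M => _ [c' Cc' <-]; exact: HM.
Qed.

Lemma aw_extract {Cs : nat -> set X} {L : set X} : closed_linear_subspace L ->
  (forall n, Cs n !=set0) -> AW_cvg Cs L ->
  forall eta : R, 0 < eta -> exists N, forall n, (N <= n)%N ->
   (exists2 a', Cs n a' & `|a'| < eta) /\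
   (forall q, Cs n q -> `|q| <= 1 -> exists2 l, L l & `|q - l| < eta).
Proof.
move=> HL Cne HAW eta e0.
have [_ [L0 _]] := HL.
have [N HN] := near_ev (cvgr0_norm_lt _ (HAW 1%N) _ e0).
exists N => n Nn; have h := HN n Nn.
have h1 : Defs.excess 1 (Cs n) L < eta.
  apply: le_lt_trans h; apply: le_trans (ler_norm _); rewrite /hN le_max lexx //.
have h2 : Defs.excess 1 L (Cs n) < eta.
  apply: le_lt_trans h; apply: le_trans (ler_norm _); rewrite /hN le_max lexx orbT //.
split.
  have [a1 Ca1] := Cne n.
  have d0 : Defs.dist 0 (Cs n) < eta.
    apply: le_lt_trans h2; apply: (excess_ge _ _ _ _ (1 + `|a1|)).
      by split => //; rewrite /Defs.nball /= normr0.
    move=> c' [_ Nc']; apply: le_trans (dist_le Ca1) _.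
    apply: le_trans (ler_normB _ _) _; rewrite lerD2r; exact: Nc'.
  have [s Cs' hs] := dist_lt (Cne n) d0.
  by exists s => //; rewrite sub0r normrN in hs.
move=> q Cq q1.
have dq : Defs.dist q L < eta.
  apply: le_lt_trans h1; apply: (excess_ge _ _ _ _ 1).
    by split.
  move=> c' [_ Nc']; apply: le_trans (dist_le L0) _.
  by rewrite subr0.
have L0' : L !=set0 by exists 0.
exact: dist_lt L0' dq.
Qed.

End AW.


Section RealCore.
Context {R : realType}.

Lemma real_core {c eta sig P Y I J K1 K2 Nu Nv E1 E2 : R} :
  0 <= c -> c <= 1 -> 0 < eta -> eta <= 8^-1 -> 13 * eta <= sig ^+ 2 -> 0 <= sig ->
  0 <= P -> 0 <= Y -> 0 <= Nu -> 0 <= Nv -> 0 <= E1 -> 0 <= E2 ->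
  Y ^+ 2 <= I + (P + Y) * eta -> I = J + K1 + K2 ->
  J <= c * Nu * Nv -> K1 <= Nv * E2 -> K2 <= E1 * Y ->
  Nv <= P + E1 -> Nu <= Y + E2 -> E1 <= 4 * eta * (1 + P) -> E2 <= 4 * eta * (1 + Y) ->
  Y <= c * P + (21 * eta + sig) * (1 + P).
Proof.
move=> c0 c1 e0 e8 hs s0 P0 Y0 Nu0 Nv0 E10 E20 hY hI hJ hK1 hK2 hNv hNu hE1 hE2.
have s1 : c * Nu * Nv <= c * (Y + E2) * (P + E1).
  rewrite -!mulrA; apply: ler_wpM2l => //; apply: ler_pM => //.
have s2 : c * (Y + E2) * (P + E1) <= c * P * Y + E1 * Y + (P + E1) * E2.
  have c1' : 0 <= 1 - c by lra.
  have := mulr_ge0 (mulr_ge0 c1' E10) Y0.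
  have := mulr_ge0 (mulr_ge0 c1' (addr_ge0 P0 E10)) E20.
  nra.
have s3 : K1 <= (P + E1) * E2 by apply: le_trans hK1 _; apply: ler_wpM2r.
have s4 : E1 * Y <= 4 * eta * (1 + P) * Y by apply: ler_wpM2r.
have s5 : (P + E1) * E2 <= (3 / 2 * (1 + P)) * (4 * eta * (1 + Y)).
  apply: ler_pM => //; first by apply: addr_ge0.
  have : 4 * eta * (1 + P) <= 2^-1 * (1 + P) by apply: ler_wpM2r; lra.
  lra.
have s6 : (P + Y) * eta <= eta * (1 + P) * (1 + Y).
  have := mulr_ge0 P0 Y0; nra.
have s7 : Y ^+ 2 <= (c * P + 21 * eta * (1 + P)) * Y + 13 * eta * (1 + P).
  have := mulr_ge0 (mulr_ge0 (ltW e0) P0) Y0.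
  nra.
have hs2 : 13 * eta * (1 + P) <= (sig * (1 + P)) ^+ 2.
  rewrite exprMn.
  have h1 : 13 * eta * (1 + P) <= 13 * eta * (1 + P) ^+ 2.
    apply: ler_wpM2l; first lra.
    by rewrite expr2; nra.
  apply: le_trans h1 _.
  by apply: ler_wpM2r => //; rewrite exprn_ge0 //; lra.
move: s7 hs2; set Bq := c * P + 21 * eta * (1 + P); set s := sig * (1 + P) => s7 hs2.
have Bq0 : 0 <= Bq by rewrite /Bq; apply: addr_ge0; [apply: mulr_ge0 | nra].
have ss0 : 0 <= s by rewrite /s mulr_ge0 //; lra.
have -> : c * P + (21 * eta + sig) * (1 + P) = Bq + s by rewrite /Bq /s; ring.
clearbody Bq s.
rewrite leNgt; apply/negP => hlt.
have : s * s <= s * Y by rewrite ler_wpM2l //; lra.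
nra.
Qed.

End RealCore.

Section OneStep.
Context {R : realType} {X : completeNormedModType R} {ip : X -> X -> R}
  (Hip : is_inner_product ip).

Lemma one_step {U V A B : set X} {c eta sig : R} {x p y : X} :
  closed_linear_subspace U -> closed_linear_subspace V ->
  0 <= c -> c <= 1 -> (forall u v, U u -> V v -> ip u v <= c * `|u| * `|v|) ->
  0 < eta -> eta <= 8^-1 -> 13 * eta <= sig ^+ 2 -> 0 <= sig ->
  Defs.convex_set A -> Defs.convex_set B ->
  (exists2 a', A a' & `|a'| < eta) -> (exists2 b', B b' & `|b'| < eta) ->
  (forall q, A q -> `|q| <= 1 -> exists2 l, U l & `|q - l| < eta) ->
  (forall q, B q -> `|q| <= 1 -> exists2 l, V l & `|q - l| < eta) ->
  is_metric_proj B x p -> is_metric_proj A p y ->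
  `|p| <= `|x| + 2 * eta /\ `|y| <= c * `|p| + (21 * eta + sig) * (1 + `|p|).
Proof.
move=> HU HV c0 c1 Hang e0 e8 hsig sig0 Ac Bc [a' Aa' na'] [b' Bb' nb'] HA HB Hp Hy.
have e2 : eta <= 2^-1 by lra.
have [v Vv hv] := cone_bound eta HV Bc e0 e2 (ex_intro2 _ _ b' Bb' nb') HB p (proj1 Hp).
have [u Uu hu] := cone_bound eta HU Ac e0 e2 (ex_intro2 _ _ a' Aa' na') HA y (proj1 Hy).
have h1 := vi Hip Bc Hp Bb'.
have h2 := vi Hip Ac Hy Aa'.
rewrite (ipBl Hip) !(ipBr Hip) (ipxx Hip) in h1.
rewrite (ipBl Hip) !(ipBr Hip) (ipxx Hip) in h2.
have nx := normr_ge0 x; have np := normr_ge0 p; have ny := normr_ge0 y.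
have na0 := normr_ge0 a'; have nb0 := normr_ge0 b'.
have cxb := CSabs Hip x b'; have cxp := CS Hip x p; have cpb := CSabs Hip p b'.
have cpa := CSabs Hip p a'; have cya := CSabs Hip y a'.
move: cxb cpb cpa cya; rewrite !ler_norml => /andP [cxb _] /andP [_ cpb] /andP [cpa _] /andP [_ cya].
have m1 : `|x| * `|b'| <= `|x| * eta by apply: ler_wpM2l => //; exact: ltW.
have m2 : `|p| * `|b'| <= `|p| * eta by apply: ler_wpM2l => //; exact: ltW.
have m3 : `|p| * `|a'| <= `|p| * eta by apply: ler_wpM2l => //; exact: ltW.
have m4 : `|y| * `|a'| <= `|y| * eta by apply: ler_wpM2l => //; exact: ltW.
have hP2 : `|p| ^+ 2 <= `|x| * `|p| + (`|x| + `|p|) * eta by lra.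
have hP : `|p| <= `|x| + 2 * eta by nra.
split => //.
have hY2 : `|y| ^+ 2 <= ip p y + (`|p| + `|y|) * eta by lra.
have eI : ip p y = ip v u + ip v (y - u) + ip (p - v) y.
  have -> : ip p y = ip v y + ip (p - v) y by rewrite -(ipDl Hip) subrKC.
  by rewrite -(ipDr Hip) subrKC.
have hJ : ip v u <= c * `|u| * `|v| by rewrite (ipC Hip); exact: Hang.
have hK1 : ip v (y - u) <= `|v| * `|y - u| := CS Hip _ _.
have hK2 : ip (p - v) y <= `|p - v| * `|y| := CS Hip _ _.
have hNv : `|v| <= `|p| + `|p - v|.
  by have := ler_normB p (p - v); rewrite subKr.
have hNu : `|u| <= `|y| + `|y - u|.
  by have := ler_normB y (y - u); rewrite subKr.
exact: (real_core c0 c1 e0 e8 hsig sig0 np ny (normr_ge0 u) (normr_ge0 v)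
  (normr_ge0 _) (normr_ge0 _) hY2 eI hJ hK1 hK2 hNv hNu hv hu).
Qed.

End OneStep.


Section Contr.
Context {R : realType}.

Lemma contr_cvg (r : nat -> R) (c : R) : 0 <= c -> c < 1 -> (forall n, 0 <= r n) ->
  (forall e, 0 < e -> exists N, forall n, (N <= n)%N -> r n.+1 <= (c + e) * r n + e) ->
  forall e0, 0 < e0 -> exists N, forall n, (N <= n)%N -> r n <= e0.
Proof.
move=> c0 c1 r0 H e0 he0.
have d0 : 0 < 8 + 4 * e0 by lra.
have [e [epos ee]] : exists e, 0 < e /\ e * (8 + 4 * e0) = e0 * (1 - c).
  exists (e0 * (1 - c) / (8 + 4 * e0)); split.
    by rewrite divr_gt0 // mulr_gt0 //; lra.
  by rewrite mulrAC -mulrA mulfV ?mulr1 //; apply: lt0r_neq0.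
have e4 : 4 * e <= 1 - c by nra.
have e8 : 8 * e <= e0 * (1 - c) by nra.
have [N HN] := H e epos.
have [c' ec'] : {c' | c + e = c'} by exists (c + e).
have c'0 : 0 <= c' by lra.
have c'1 : c' < 1 by lra.
have [B [B0 eB]] : exists B, 0 <= B /\ B * (1 - c') = e.
  exists (e / (1 - c')); split; first by rewrite divr_ge0 //; lra.
  by rewrite mulrAC -mulrA mulfV ?mulr1 //; apply: lt0r_neq0; lra.
have Be : B <= e0 / 2.
  have : B * (3 * (1 - c) / 4) <= B * (1 - c') by apply: ler_wpM2l => //; lra.
  nra.
have claim : forall k, r (N + k)%N <= c' ^+ k * r N + B.
  elim => [|k IH]; first by rewrite addn0 expr0 mul1r; lra.
  rewrite addnS; apply: le_trans (HN _ (leq_addr _ _)) _.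
  rewrite ec' exprS.
  have := ler_wpM2l c'0 IH.
  nra.
have hc' : `|c'| < 1 by rewrite ger0_norm.
have rN1 : 0 < r N + 1 by have := r0 N; lra.
have eps : 0 < e0 / 2 / (r N + 1) by rewrite !divr_gt0.
have [K HK] := near_ev (cvgr0_norm_lt _ (cvg_expr hc') _ eps).
exists (N + K)%N => n hn.
have hNn : (N <= n)%N by apply: leq_trans hn; exact: leq_addr.
have -> : n = (N + (n - N))%N by rewrite subnKC.
have hk : (K <= n - N)%N by rewrite leq_subRL.
have h1 := claim (n - N)%N.
have h2 := HK _ hk.
move: h2; rewrite /= ger0_norm ?exprn_ge0 // ltr_pdivlMr // => h2.
have q0 : 0 <= c' ^+ (n - N) by rewrite exprn_ge0.
have h3 := r0 N.
move: h1 h2 q0; move: (c' ^+ (n - N)) => q h1 h2 q0.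
nra.
Qed.

End Contr.


Theorem corollary4p19 (R : realType) (X : completeNormedModType R)
  (ip : X -> X -> R) (Hip : is_inner_product ip) (U V : set X) :
  closed_linear_subspace U -> closed_linear_subspace V ->
  U `&` V = [set 0] ->
  closed [set u + v | u in U & v in V] ->
  stable_couple U V.
Proof.
move=> HU HV UV0 Wcl As Bs HA HB AWA AWB a0 a b [ea0 [Hb Ha]].
have [c [c0 c1 Hang]] := angle Hip HU HV UV0 Wcl.
have Ane : forall n, As n !=set0 by move=> n; case: (HA n) => _ [].
have Bne : forall n, Bs n !=set0 by move=> n; case: (HB n) => _ [].
have Acv : forall n, Defs.convex_set (As n) by move=> n; case: (HA n) => _ [].
have Bcv : forall n, Defs.convex_set (Bs n) by move=> n; case: (HB n) => _ [].
have est : forall e, 0 < e -> exists N, forall n, (N <= n)%N ->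
    `|a n.+1| <= (c + e) * `|a n| + e /\ `|b n.+1| <= `|a n| + e.
  move=> e e0.
  pose eta := Num.min (8^-1 : R) (Num.min (e / 100) (e ^+ 2 / 208)).
  have eta0 : 0 < eta.
    rewrite /eta !lt_min; apply/andP; split; first lra.
    apply/andP; split; first lra.
    have := exprn_gt0 2 e0; lra.
  have eta8 : eta <= 8^-1 by rewrite /eta !ge_min lexx.
  have etae : eta <= e / 100 by rewrite /eta !ge_min lexx ?orbT.
  have etae2 : eta <= e ^+ 2 / 208 by rewrite /eta !ge_min lexx ?orbT.
  clearbody eta.
  have sig0 : 0 <= e / 4 by rewrite divr_ge0 //; lra.
  have hsig : 13 * eta <= (e / 4) ^+ 2.
    rewrite expr_div_n; move: etae2; move: (e ^+ 2) => e2; lra.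
  have [NA HNA] := aw_extract HU Ane AWA _ eta0.
  have [NB HNB] := aw_extract HV Bne AWB _ eta0.
  exists (maxn NA NB) => n hn.
  have hnA : (NA <= n.+1)%N by apply: leq_trans (leq_maxl NA NB) _; apply: leq_trans hn _.
  have hnB : (NB <= n.+1)%N by apply: leq_trans (leq_maxr NA NB) _; apply: leq_trans hn _.
  have [HA1 HA2] := HNA _ hnA; have [HB1 HB2] := HNB _ hnB.
  have [hP hY] := one_step Hip HU HV c0 (ltW c1) Hang eta0 eta8 hsig sig0
    (Acv n.+1) (Bcv n.+1) HA1 HB1 HA2 HB2 (Hb n) (Ha n).
  have nx := normr_ge0 (a n); have np := normr_ge0 (b n.+1).
  split; last by lra.
  move: hY; set rho := 21 * eta + e / 4 => hY.
  have rho0 : 0 <= rho by rewrite /rho; lra.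
  have rhoe : rho <= e / 2 by rewrite /rho; lra.
  clearbody rho.
  have g1 : 0 <= `|a n| + 2 * eta - `|b n.+1| by lra.
  have g2 : 0 <= 8^-1 - eta by lra.
  have g3 : 0 <= e - rho by lra.
  have g4 : 0 <= 1 - c by lra.
  have h1 := mulr_ge0 (addr_ge0 c0 rho0) g1.
  have h2 := mulr_ge0 rho0 g2.
  have h3 := mulr_ge0 g3 nx.
  have h4 := mulr_ge0 g4 (ltW eta0).
  nra.
have ra := contr_cvg (fun n => `|a n|) c c0 c1 (fun n => normr_ge0 _)
  (fun e e0 => let: ex_intro N HN := est e e0 in ex_intro _ N (fun n hn => proj1 (HN n hn))).
have acv : a @ \oo --> 0.
  apply/cvgr0Pnorm_lt => e e0.
  have [N HN] := ra (e / 2) (divr_gt0 e0 (ltr0Sn _ 1)).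
  exists N => // n /= Nn; have := HN n Nn; lra.
have bcv : b @ \oo --> 0.
  apply/cvgr0Pnorm_lt => e e0.
  have [N1 HN1] := ra (e / 2) (divr_gt0 e0 (ltr0Sn _ 1)).
  have [N2 HN2] := est (e / 4) (divr_gt0 e0 (ltr0Sn _ 3)).
  exists (maxn N1 N2).+1 => // -[|n] //= hn.
  have h1 := HN1 n (leq_trans (leq_maxl N1 N2) hn).
  have [_ h2] := HN2 n (leq_trans (leq_maxr N1 N2) hn).
  lra.
by split; apply/cvg_ex; exists 0.
Qed.
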